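(* For every positive integer $N$ there exists a full spark equal norm tight integer frame with $2N$ elements in $\mathcal{H}_2$.
   Context: $\mathcal{H}_M$ is the real $M$-dimensional Hilbert space, identified with $\mathbb{R}^M$ via a fixed orthonormal basis. An equal norm tight integer frame (ENTIF) with $N$ elements in $\mathcal{H}_M$ is an $M\times N$ integer matrix $A$ of rank $M$ with $AA^T=\lambda I_M$ for some $\lambda>0$ and all columns of the same Euclidean norm (its columns are the frame vectors). A frame of $N\ge M$ vectors in $\mathcal{H}_M$ is full spark if every subset of $M$ of its vectors is linearly independent. *)

(* Defs.v *)
From mathcomp Require Import all_boot all_order all_algebra.
Set Implicit Arguments. Unset Strict Implicit. Unset Printing Implicit Defensive.
Import Order.TTheory GRing.Theory Num.Theory.
Local Open Scope ring_scope.

(* An M x N integer matrix; its columns are the frame vectors in R^M. *)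
Definition intmx_to_rat (M N : nat) (A : 'M[int]_(M, N)) : 'M[rat]_(M, N) :=
  map_mx (fun z : int => z%:~R) A.

Definition is_ENTIF (M N : nat) (A : 'M[int]_(M, N)) : Prop :=
  [/\ \rank (intmx_to_rat A) = M,
      exists2 lambda : int, 0 < lambda & A *m A^T = lambda%:M
    & forall j k : 'I_N, \sum_(i < M) A i j ^+ 2 = \sum_(i < M) A i k ^+ 2].

Definition full_spark (M N : nat) (A : 'M[int]_(M, N)) : Prop :=
  forall f : 'I_M -> 'I_N, injective f ->
    row_free (colsub f (intmx_to_rat A))^T.

(* Main.v *)
Require Import Defs.
From mathcomp Require Import all_boot all_order all_algebra ring lra zify.
Import Order.TTheory GRing.Theory Num.Theory.
Local Open Scope ring_scope.
Lemma det2 (R : comPzRingType) (A : 'M[R]_2) : \det A = A 0 0 * A 1 1 - A 0 1 * A 1 0.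
Proof.
rewrite (expand_det_row _ 0) !big_ord_recl big_ord0 /cofactor !det_mx11 !mxE /=.
have e1 : lift (0 : 'I_2) (0 : 'I_1) = 1 by apply/val_inj.
have e2 : lift (ord0 : 'I_2) (0 : 'I_1) = 1 by apply/val_inj.
have e3 : lift (ord0 : 'I_2) (ord0 : 'I_1) = 1 by apply/val_inj.
have e4 : lift (lift (ord0 : 'I_2) (ord0 : 'I_1)) (0 : 'I_1) = 0 by apply/val_inj.
rewrite ?e4 ?e1 ?e2 ?e3 ?e4 /= ?expr0 ?expr1. have e5 : (ord0 : 'I_2) = 0 by apply/val_inj.
rewrite e5; ring.
Qed.

Definition cc (k : nat) : int := 1 + (k.+1)%:Z ^+ 2.
Definition PP (N k : nat) : int := \prod_(j <- iota 0 N | j != k) cc j.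
Definition DD (N : nat) : int := \prod_(j <- iota 0 N) cc j.
Definition xk (N k : nat) : int := (1 - (k.+1)%:Z ^+ 2) * PP N k.
Definition yk (N k : nat) : int := 2 * (k.+1)%:Z * PP N k.
Definition XX (N j : nat) : int := if (j < N)%N then xk N j else - yk N (j - N).
Definition YY (N j : nat) : int := if (j < N)%N then yk N j else xk N (j - N).
Definition AA (N : nat) : 'M[int]_(2, 2 * N) :=
  \matrix_(i < 2, j < 2 * N) if (i == 0 :> nat) then XX N j else YY N j.

Lemma cc_gt0 k : 0 < cc k.
Proof. rewrite /cc expr2; nia. Qed.

Lemma PP_gt0 N k : 0 < PP N k.
Proof. by apply: prodr_gt0 => i _; apply: cc_gt0. Qed.

Lemma DD_eq N k : (k < N)%N -> DD N = cc k * PP N k.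
Proof.
move=> kN; rewrite /DD /PP (bigD1_seq k) //; last exact: iota_uniq.
by rewrite mem_iota.
Qed.

Lemma norm_k N k : (k < N)%N -> xk N k ^+ 2 + yk N k ^+ 2 = DD N ^+ 2.
Proof. move=> kN; rewrite (@DD_eq N k kN) /xk /yk /cc; ring. Qed.

Lemma L1 N k l : k != l -> xk N k * yk N l - xk N l * yk N k != 0.
Proof.
move=> kl.
have -> : xk N k * yk N l - xk N l * yk N k =
   2 * PP N k * PP N l * (((l.+1)%:Z - (k.+1)%:Z) * (1 + (k.+1)%:Z * (l.+1)%:Z)).
  rewrite /xk /yk; ring.
rewrite !mulf_neq0 ?(gt_eqF (PP_gt0 _ _)) //.
- rewrite subr_eq0; apply/eqP => h; move: kl; rewrite eq_sym.
  by move: h => /eqP; rewrite eqz_nat eqSS => ->.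
Qed.

Lemma L2 N k l : 0 < xk N k * xk N l + yk N k * yk N l.
Proof.
have -> : xk N k * xk N l + yk N k * yk N l =
   PP N k * PP N l * (((k.+1)%:Z ^+ 2 - 1) * ((l.+1)%:Z ^+ 2 - 1)
                      + 4 * (k.+1)%:Z * (l.+1)%:Z).
  rewrite /xk /yk; ring.
rewrite !mulr_gt0 ?PP_gt0 //.
apply: ltr_wpDl; last by nia.
apply: mulr_ge0; rewrite expr2; nia.
Qed.

Lemma key N a b : (a < 2 * N)%N -> (b < 2 * N)%N -> a != b ->
  XX N a * YY N b - XX N b * YY N a != 0.
Proof.
move=> ha hb ab; rewrite /XX /YY.
case: ifP => aN; case: ifP => bN.
- exact: L1.
- rewrite (_ : _ - _ = xk N a * xk N (b - N) + yk N a * yk N (b - N)); last by ring.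
  by rewrite gt_eqF ?L2.
- rewrite (_ : _ - _ = - (xk N b * xk N (a - N) + yk N b * yk N (a - N))); last by ring.
  by rewrite oppr_eq0 gt_eqF ?L2.
- rewrite (_ : _ - _ = xk N (a - N) * yk N (b - N) - xk N (b - N) * yk N (a - N)); last by ring.
  apply: L1; apply/eqP => h; move/eqP: ab; apply; move: aN bN h; lia.
Qed.

Lemma sum2N N (F : nat -> int) :
  \sum_(l < 2 * N) F l = \sum_(k < N) F k + \sum_(k < N) F (k + N)%N.
Proof.
rewrite mul2n -addnn big_split_ord /=; congr (_ + _).
by apply: eq_bigr => i _; rewrite addnC.
Qed.

Lemma XXl N k : (k < N)%N -> XX N k = xk N k.
Proof. by rewrite /XX => ->. Qed.
Lemma YYl N k : (k < N)%N -> YY N k = yk N k.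
Proof. by rewrite /YY => ->. Qed.
Lemma XXr N k : XX N (k + N) = - yk N k.
Proof. by rewrite /XX ltnNge leq_addl /= addnK. Qed.
Lemma YYr N k : YY N (k + N) = xk N k.
Proof. by rewrite /YY ltnNge leq_addl /= addnK. Qed.

Definition lam N : int := \sum_(k < N) (xk N k ^+ 2 + yk N k ^+ 2).

Lemma AAT N : AA N *m (AA N)^T = (lam N)%:M.
Proof.
apply/matrixP => i j; rewrite !mxE.
under eq_bigr do rewrite !mxE.
case: i => [[|[|//]] Hi]; case: j => [[|[|//]] Hj] /=.
- rewrite (sum2N N (fun l => XX N l * XX N l)) /lam -big_split /=.
  by apply: eq_bigr => k _; rewrite XXl // XXr mulrNN !expr2.
- rewrite (sum2N N (fun l => XX N l * YY N l)) -big_split /=.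
  by rewrite big1 // => k _; rewrite XXl // YYl // XXr YYr; ring.
- rewrite (sum2N N (fun l => YY N l * XX N l)) -big_split /=.
  by rewrite big1 // => k _; rewrite XXl // YYl // XXr YYr; ring.
- rewrite (sum2N N (fun l => YY N l * YY N l)) /lam -big_split /=.
  by apply: eq_bigr => k _; rewrite YYl // YYr !expr2 addrC.
Qed.

Lemma normXY N (j : 'I_(2 * N)) : XX N j ^+ 2 + YY N j ^+ 2 = DD N ^+ 2.
Proof.
have := ltn_ord j; rewrite /XX /YY; case: ifP => h hj.
  exact: norm_k.
rewrite sqrrN addrC norm_k //; move: h hj; lia.
Qed.

Theorem theorem4p2 (N : nat) (hN : (0 < N)%N) :
  exists A : 'M[int]_(2, 2 * N), is_ENTIF A /\ full_spark A.
Proof.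
have DD0 : 0 < DD N by apply: prodr_gt0 => i _; apply: cc_gt0.
have lam0 : 0 < lam N.
  rewrite /lam (eq_bigr (fun _ => DD N ^+ 2)) ?sumr_const ?card_ord.
    by rewrite pmulrn_lgt0 // exprn_gt0.
  by move=> k _; rewrite norm_k.
exists (AA N); split; last first.
  move=> f finj.
  rewrite row_free_unit unitmxE det_tr det2 unitfE !mxE.
  rewrite /= -!intrM -intrB intr_eq0.
  apply: key => //; apply/eqP => h.
  by have := finj 0 1 (val_inj h).
split.
- have H : intmx_to_rat (AA N) *m (intmx_to_rat (AA N))^T = ((lam N)%:~R : rat)%:M.
    by rewrite /intmx_to_rat map_trmx -map_mxM AAT map_scalar_mx.
  apply/eqP; rewrite eqn_leq rank_leq_row /=.
  apply: (mulmx1_min_rank (M := (((lam N)%:~R : rat)^-1)%:M) (N := (intmx_to_rat (AA N))^T)).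
  rewrite -mulmxA H mul_scalar_mx scale_scalar_mx mulVf //.
  by rewrite intr_eq0 gt_eqF.
- by exists (lam N); [| exact: AAT].
- move=> j k; rewrite !big_ord_recl big_ord0 !mxE /=.
  by rewrite !big_ord0 !addr0 !normXY.
Qed.
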